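(* It holds that $$\mathrm{cl}\,\mathrm{conv}(P^B\setminus C)=\mathrm{cl}\,\mathrm{conv}\big(P^B\setminus T^{P^B\cap C}\big),$$ where $T^{P^B\cap C}=\{\bar x\}+\mathrm{conv}\big(\bigcup_{j\in N_1\cup N_2}\{\lambda\bar r^j:\alpha_j<\lambda<\beta_j\}\big)+\mathrm{recc}(P^B\cap C)$.
   Context: Let $A\in\mathbb{R}^{m\times n}$ have full row rank, $b\in\mathbb{R}^m$, and $P=\{x\in\mathbb{R}^n_+:Ax=b\}$. Let $C\subseteq\mathbb{R}^n$ be an open convex set. Fix a basis $B$ of $P$ with nonbasic set $N=\{1,\dots,n\}\setminus B$. Write $P=\{x:x_i=\bar b_i-\sum_{j\in N}\bar a_{ij}x_j\ (i\in B),\ x\ge0\}$ with $\bar b\ge0$. The basic solution $\bar x$ has $\bar x_i=\bar b_i$ ($i\in B$) and $0$ ($i\in N$). $P^B$ is obtained by dropping $x_i\ge0$ for $i\in B$. For $j\in N$, $\bar r^j$ has $\bar r^j_k=-\bar a_{kj}$ ($k\in B$), $\bar r^j_j=1$, and $0$ otherwise. Thus $P^B=\{\bar x+\sum_{j\in N}x_j\bar r^j:x_j\ge0\}$. It is assumed that $\bar x\notin\mathrm{cl}(C)$. For $j\in N$, $\alpha_j=\inf\{\lambda\ge0:\bar x+\lambda\bar r^j\in C\}$ and $\beta_j=\sup\{\lambda\ge0:\bar x+\lambda\bar r^j\in C\}$, with $\alpha_j=+\infty$, $\beta_j=-\infty$ if the halfline misses $C$. These values are unchanged if $C$ is replaced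 by $P^B\cap C$. Define - $N_1=\{j:\alpha_j\in(0,\infty),\beta_j=+\infty\}$; - $N_2=\{j:\alpha_j\in(0,\infty),\beta_j\in(\alpha_j,\infty)\}$. For a set $K$, $\mathrm{recc}(K)=\{d:x+\lambda d\in K\ \forall x\in K,\lambda\ge0\}$. Here $\mathrm{cl}\,\mathrm{conv}$ is the closure of the convex hull. *)

(* Defs.v *)
From HB Require Import structures.
From mathcomp Require Import all_boot all_order all_algebra.
From mathcomp Require Import all_classical all_reals all_analysis.
Set Implicit Arguments. Unset Strict Implicit. Unset Printing Implicit Defensive.
Import Order.TTheory GRing.Theory Num.Theory.
Import numFieldNormedType.Exports.
Local Open Scope classical_set_scope.
Local Open Scope ring_scope.

Section Defs.
Variable R : realType.

Definition convexS (n : nat) (K : set 'cV[R]_n) : Prop :=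
  forall x y (t : R), K x -> K y -> 0 <= t -> t <= 1 -> K (t *: x + (1 - t) *: y).

Definition conv_hull (n : nat) (S : set 'cV[R]_n) : set 'cV[R]_n :=
  [set x | exists (k : nat) (w : 'I_k -> R) (p : 'I_k -> 'cV[R]_n),
     [/\ forall i, 0 <= w i, \sum_(i < k) w i = 1, forall i, S (p i)
       & x = \sum_(i < k) w i *: p i]].

Definition recc (n : nat) (K : set 'cV[R]_n) : set 'cV[R]_n :=
  [set d | forall x (lam : R), K x -> 0 <= lam -> K (x + lam *: d)].

(* A basis of P = {x >= 0 : A x = b} is given by an injective enumeration
   beta : 'I_m -> 'I_n of the basic variables (B = image of beta) such that
   the basis matrix A_B is invertible. *)
Variables (m n : nat) (A : 'M[R]_(m, n)) (b : 'cV[R]_m) (beta : 'I_m -> 'I_n).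

Definition isbasic (i : 'I_n) : bool := [exists k, beta k == i].
Definition nonbasic (i : 'I_n) : bool := ~~ isbasic i.

Definition AB : 'M[R]_m := colsub beta A.
Definition bbar : 'cV[R]_m := invmx AB *m b.
Definition abar : 'M[R]_(m, n) := invmx AB *m A.

Definition P : set 'cV[R]_n :=
  [set x | A *m x = b /\ forall i, 0 <= x i 0].

(* P^B : drop nonnegativity of the basic variables in the tableau description *)
Definition PB : set 'cV[R]_n :=
  [set x | (forall k : 'I_m,
              x (beta k) 0 = bbar k 0 - \sum_(j < n | nonbasic j) abar k j * x j 0)
         /\ (forall j, nonbasic j -> 0 <= x j 0)].

Definition xbar : 'cV[R]_n :=
  \col_i (match [pick k | beta k == i] with Some k => bbar k 0 | None => 0 end).

Definition rbar (j : 'I_n) : 'cV[R]_n :=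
  \col_i (match [pick k | beta k == i] with
          | Some k => - abar k j
          | None => if i == j then 1 else 0 end).

Variable C : set 'cV[R]_n.

Definition alpha (j : 'I_n) : \bar R :=
  ereal_inf [set (lam%:E) | lam in [set lam : R | 0 <= lam /\ C (xbar + lam *: rbar j)]].
Definition beta_ (j : 'I_n) : \bar R :=
  ereal_sup [set (lam%:E) | lam in [set lam : R | 0 <= lam /\ C (xbar + lam *: rbar j)]].

Definition N1 : set 'I_n :=
  [set j | nonbasic j /\ [/\ (0 < alpha j)%E, (alpha j < +oo)%E & beta_ j = +oo%E]].
Definition N2 : set 'I_n :=
  [set j | nonbasic j /\ [/\ (0 < alpha j)%E, (alpha j < +oo)%E,
                             (alpha j < beta_ j)%E & (beta_ j < +oo)%E]].

Definition TPC : set 'cV[R]_n :=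
  [set x | exists y z,
     [/\ conv_hull
            [set v | exists j, (N1 j \/ N2 j) /\
               exists lam : R, (alpha j < lam%:E < beta_ j)%E /\ v = lam *: rbar j] y,
          recc (PB `&` C) z
        & x = xbar + y + z]].

End Defs.

(* Main.v *)
Require Import Defs.
From HB Require Import structures.
From mathcomp Require Import all_boot all_order all_algebra.
From mathcomp Require Import all_classical all_reals all_analysis.
From mathcomp.algebra_tactics Require Import ring lra.
Import Order.TTheory GRing.Theory Num.Theory.
Import numFieldNormedType.Exports.
Local Open Scope classical_set_scope.
Local Open Scope ring_scope.
Set Implicit Arguments. Unset Strict Implicit. Unset Printing Implicit Defensive.
Lemma pick_basic (m n : nat) (beta : 'I_m -> 'I_n) (k : 'I_m) :
  injective beta -> [pick k' | beta k' == beta k] = Some k.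
Proof.
move=> inj; case: pickP => [k' /eqP h|h]; first by rewrite (inj _ _ h).
by have := h k; rewrite eqxx.
Qed.

Lemma pick_nonbasic (m n : nat) (beta : 'I_m -> 'I_n) (i : 'I_n) :
  nonbasic beta i -> [pick k | beta k == i] = None.
Proof.
rewrite /nonbasic /isbasic => /existsPn H; case: pickP => // k hk.
by have := H k; rewrite hk.
Qed.

Lemma basic_or (m n : nat) (beta : 'I_m -> 'I_n) (i : 'I_n) :
  nonbasic beta i \/ exists k, i = beta k.
Proof.
rewrite /nonbasic /isbasic; case: existsP => [[k /eqP <-]|_]; last by left.
by right; exists k.
Qed.

Lemma nonbasic_beta (m n : nat) (beta : 'I_m -> 'I_n) k : ~~ nonbasic beta (beta k).
Proof. by rewrite /nonbasic negbK; apply/existsP; exists k. Qed.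


Lemma xbar_basic (R : realType) m n (A : 'M[R]_(m, n)) b beta k :
  injective beta -> xbar A b beta (beta k) 0 = bbar A b beta k 0.
Proof. by move=> inj; rewrite /xbar mxE pick_basic. Qed.

Lemma xbar_nb (R : realType) m n (A : 'M[R]_(m, n)) b beta i :
  nonbasic beta i -> xbar A b beta i 0 = 0.
Proof. by move=> h; rewrite /xbar mxE pick_nonbasic. Qed.

Lemma rbar_basic (R : realType) m n (A : 'M[R]_(m, n)) beta j k :
  injective beta -> rbar A beta j (beta k) 0 = - abar A beta k j.
Proof. by move=> inj; rewrite /rbar mxE pick_basic. Qed.

Lemma rbar_nb (R : realType) m n (A : 'M[R]_(m, n)) beta j i :
  nonbasic beta i -> rbar A beta j i 0 = if i == j then 1 else 0.
Proof. by move=> h; rewrite /rbar mxE pick_nonbasic. Qed.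

Lemma cone_entry (R : realType) m n (A : 'M[R]_(m, n)) beta (mu : 'I_n -> R) i :
  (\sum_(j | nonbasic beta j) mu j *: rbar A beta j) i 0 =
  \sum_(j | nonbasic beta j) mu j * rbar A beta j i 0.
Proof. by rewrite summxE; apply: eq_bigr => j _; rewrite mxE. Qed.

Lemma cone_entry_nb (R : realType) m n (A : 'M[R]_(m, n)) beta (mu : 'I_n -> R) i :
  nonbasic beta i ->
  (\sum_(j | nonbasic beta j) mu j *: rbar A beta j) i 0 = mu i.
Proof.
move=> hi; rewrite cone_entry (bigD1 i) //= rbar_nb // eqxx mulr1 big1 ?addr0 //.
by move=> j /andP[hj hji]; rewrite rbar_nb // eq_sym (negbTE hji) mulr0.
Qed.

Lemma cone_entry_basic (R : realType) m n (A : 'M[R]_(m, n)) beta (mu : 'I_n -> R) k :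
  injective beta ->
  (\sum_(j | nonbasic beta j) mu j *: rbar A beta j) (beta k) 0 =
  - \sum_(j | nonbasic beta j) abar A beta k j * mu j.
Proof.
move=> inj; rewrite cone_entry -sumrN; apply: eq_bigr => j _.
by rewrite rbar_basic // mulrN mulrC.
Qed.

Lemma PB_cone (R : realType) m n (A : 'M[R]_(m, n)) b beta (mu : 'I_n -> R) :
  injective beta -> (forall j, nonbasic beta j -> 0 <= mu j) ->
  PB A b beta (xbar A b beta + \sum_(j | nonbasic beta j) mu j *: rbar A beta j).
Proof.
move=> inj hmu; split.
- move=> k; rewrite [(_ + _ : 'cV_n) _ 0]mxE xbar_basic // cone_entry_basic //.
  congr (_ - _); apply: eq_bigr => j hj.
  by rewrite [(_ + _ : 'cV_n) j 0]mxE xbar_nb // add0r cone_entry_nb.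
- by move=> j hj; rewrite [(_ + _ : 'cV_n) _ 0]mxE xbar_nb // add0r cone_entry_nb // hmu.
Qed.

Lemma PB_repr (R : realType) m n (A : 'M[R]_(m, n)) b beta x :
  injective beta -> PB A b beta x ->
  x = xbar A b beta + \sum_(j | nonbasic beta j) x j 0 *: rbar A beta j.
Proof.
move=> inj [hB hN]; apply/matrixP => i j0; rewrite ord1 mxE.
case: (basic_or beta i) => [hi|[k ->]].
  by rewrite xbar_nb // add0r cone_entry_nb.
by rewrite xbar_basic // cone_entry_basic // hB.
Qed.

Lemma PB_nonneg (R : realType) m n (A : 'M[R]_(m, n)) b beta x j :
  PB A b beta x -> nonbasic beta j -> 0 <= x j 0.
Proof. by case=> _ h; apply: h. Qed.

Lemma PB_convex (R : realType) m n (A : 'M[R]_(m, n)) b beta :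
  injective beta -> convexS (PB A b beta).
Proof.
move=> inj x y t hx hy t0 t1.
have -> : t *: x + (1 - t) *: y = xbar A b beta +
    \sum_(j | nonbasic beta j) (t * x j 0 + (1 - t) * y j 0) *: rbar A beta j.
  rewrite {1}(PB_repr inj hx) {1}(PB_repr inj hy).
  rewrite !scalerDr addrACA -scalerDl [t + _]addrC subrK scale1r.
  congr (_ + _); rewrite !scaler_sumr -big_split /=; apply: eq_bigr => j _.
  by rewrite [in RHS]scalerDl !scalerA.
apply: PB_cone => // j hj.
have h1 := PB_nonneg hx hj; have h2 := PB_nonneg hy hj.
by rewrite addr_ge0 // mulr_ge0 // subr_ge0.
Qed.

Definition cf (R : realType) n (c y : 'cV[R]_n) : R := \sum_i c i 0 * y i 0.

Lemma cfD (R : realType) n (c y z : 'cV[R]_n) : cf c (y + z) = cf c y + cf c z.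
Proof. by rewrite /cf -big_split; apply: eq_bigr => i _; rewrite mxE mulrDr. Qed.

Lemma cfZ (R : realType) n (c y : 'cV[R]_n) a : cf c (a *: y) = a * cf c y.
Proof. by rewrite /cf mulr_sumr; apply: eq_bigr => i _; rewrite mxE mulrCA. Qed.

Lemma cfN (R : realType) n (c y : 'cV[R]_n) : cf c (- y) = - cf c y.
Proof. by rewrite -scaleN1r cfZ mulN1r. Qed.

Lemma cfB (R : realType) n (c y z : 'cV[R]_n) : cf c (y - z) = cf c y - cf c z.
Proof. by rewrite cfD cfN. Qed.

Lemma cf_sum (R : realType) n (c : 'cV[R]_n) (I : finType) (P : pred I) (F : I -> 'cV[R]_n) :
  cf c (\sum_(j | P j) F j) = \sum_(j | P j) cf c (F j).
Proof.
rewrite /cf; under eq_bigr => i _ do rewrite summxE mulr_sumr.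
by rewrite exchange_big.
Qed.

Lemma conv_aux (R : realType) n (K : set 'cV[R]_n) : convexS K ->
  forall k (w : 'I_k -> R) (p : 'I_k -> 'cV[R]_n),
  (forall i, 0 <= w i) -> (forall i, K (p i)) -> 0 < \sum_(i < k) w i ->
  K ((\sum_(i < k) w i)^-1 *: \sum_(i < k) w i *: p i).
Proof.
move=> cK; elim=> [|k IH] w p w0 pK.
  by rewrite big_ord0 ltxx.
rewrite !big_ord_recr /=.
set s := \sum_(i < k) w (widen_ord (leqnSn k) i).
set wl := w ord_max.
have s0 : 0 <= s by apply: sumr_ge0.
have wl0 : 0 <= wl by apply: w0.
have [s_eq0|s_gt0] := eqVneq s 0.
  have hz : forall i : 'I_k, w (widen_ord (leqnSn k) i) = 0.
    have H := @psumr_eq0P R _ xpredT (fun i : 'I_k => w (widen_ord (leqnSn k) i))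
      (fun i _ => w0 _) s_eq0.
    by move=> i; apply: H.
  rewrite big1; last by move=> i _; rewrite hz scale0r.
  rewrite s_eq0 !add0r => wpos; rewrite scalerA mulVf ?scale1r //.
  by rewrite gt_eqF.
move=> spos; have sp : 0 < s by rewrite lt_def s_gt0 s0.
have := IH (fun i => w (widen_ord (leqnSn k) i)) (fun i => p (widen_ord (leqnSn k) i))
  (fun i => w0 _) (fun i => pK _) sp.
move=> hK.
have spw : 0 < s + wl by lra.
have t0 : 0 <= s / (s + wl) by rewrite divr_ge0 // ltW.
have t1 : s / (s + wl) <= 1 by rewrite ler_pdivrMr // mul1r lerDl.
have := cK _ _ _ hK (pK ord_max) t0 t1.
congr K.
rewrite scalerA scalerDr scalerA; congr (_ + _).
  congr (_ *: _); rewrite -/s; field.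
  by rewrite s_gt0 gt_eqF.
congr (_ *: _); field; by rewrite gt_eqF.
Qed.

Lemma conv_sub (R : realType) n (K S : set 'cV[R]_n) :
  convexS K -> S `<=` K -> conv_hull S `<=` K.
Proof.
move=> cK SK x [k [w [p [w0 w1 pS ->]]]].
have := conv_aux cK w0 (fun i => SK _ (pS i)); rewrite w1 invr1 scale1r.
by apply; rewrite ltr01.
Qed.

Lemma closure_normP (R : realType) n (A : set 'cV[R]_n) x :
  closure A x <-> forall e, 0 < e -> exists y, A y /\ `|x - y| < e.
Proof.
split.
  move=> cx e e0; have [y [Ay bxy]] := cx _ (nbhsx_ballx x e e0).
  by exists y; split => //; rewrite -ball_normE in bxy.
move=> H B /nbhs_ballP [e e0 eB].
have [y [Ay hy]] := H e e0; exists y; split => //; apply: eB.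
by rewrite -ball_normE.
Qed.

Lemma closure_convex (R : realType) n (K : set 'cV[R]_n) :
  convexS K -> convexS (closure K).
Proof.
move=> cK x y t cx cy t0 t1; apply/closure_normP => e e0.
have e20 : 0 < e / 2 by rewrite divr_gt0.
have [x' [Kx' hx]] := (iffLR (closure_normP K x)) cx _ e20.
have [y' [Ky' hy]] := (iffLR (closure_normP K y)) cy _ e20.
exists (t *: x' + (1 - t) *: y'); split; first exact: cK.
have -> : t *: x + (1 - t) *: y - (t *: x' + (1 - t) *: y') =
    t *: (x - x') + (1 - t) *: (y - y').
  by rewrite !scalerBr opprD addrACA.
apply: (le_lt_trans (ler_normD _ _)); rewrite !normrZ.
rewrite (ger0_norm t0) ger0_norm ?subr_ge0 //.
have a0 := normr_ge0 (x - x'); have b0 := normr_ge0 (y - y').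
nra.
Qed.

Lemma trmx_continuous (R : realType) m n : continuous (@trmx R m n).
Proof.
move=> M A /= [P hP hPA].
exists (fun i j => P j i).
  by move=> i j; have := hP j i; rewrite mxE.
move=> N hN; apply: hPA => i j; rewrite mxE; exact: hN.
Qed.

Lemma cf_sym (R : realType) n (c y : 'cV[R]_n) : cf c y = cf y c.
Proof. by rewrite /cf; apply: eq_bigr => i _; rewrite mulrC. Qed.

Lemma cfDl (R : realType) n (c d y : 'cV[R]_n) : cf (c + d) y = cf c y + cf d y.
Proof. by rewrite cf_sym cfD !(cf_sym y). Qed.

Lemma cfZl (R : realType) n (c y : 'cV[R]_n) a : cf (a *: c) y = a * cf c y.
Proof. by rewrite cf_sym cfZ cf_sym. Qed.

Lemma cf_self_ge0 (R : realType) n (c : 'cV[R]_n) : 0 <= cf c c.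
Proof. by apply: sumr_ge0 => i _; rewrite -expr2 sqr_ge0. Qed.

Lemma cf_self_eq0 (R : realType) n (c : 'cV[R]_n) : cf c c = 0 -> c = 0.
Proof.
move=> h; have H := @psumr_eq0P R _ xpredT (fun i => c i 0 * c i 0)
  (fun i _ => ltac:(rewrite /= -expr2; exact: sqr_ge0)) h.
apply/matrixP => i j; rewrite ord1 mxE; apply/eqP.
by rewrite -sqrf_eq0 expr2 H.
Qed.

Lemma cf_expand (R : realType) n (a b : 'cV[R]_n) t :
  cf (a + t *: b) (a + t *: b) = cf a a + 2 * t * cf a b + t ^+ 2 * cf b b.
Proof.
rewrite !cfD !cfDl !cfZ !cfZl (cf_sym b a); ring.
Qed.

Lemma var_ineq (R : realType) (u v : R) :
  (forall t, 0 < t -> t <= 1 -> 0 <= 2 * t * u + t ^+ 2 * v) -> 0 <= v -> 0 <= u.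
Proof.
move=> H v0; rewrite leNgt; apply/negP => u0.
have vu : 0 < v - u by lra.
have t0 : 0 < - u / (v - u) by rewrite divr_gt0 // oppr_gt0.
have t1 : - u / (v - u) <= 1 by rewrite ler_pdivrMr // mul1r; lra.
have := H _ t0 t1.
set t := - u / (v - u).
have ht : t * (v - u) = - u by rewrite /t mulfVK // gt_eqF.
have : 0 <= (2 * t * u + t ^+ 2 * v) * (v - u) -> False.
  have -> : (2 * t * u + t ^+ 2 * v) * (v - u) = t * (2 * u * (v - u) + v * (t * (v - u))).
    by ring.
  rewrite ht pmulr_rge0 //; nra.
move=> hF h; apply: hF; rewrite mulr_ge0 // ltW //.
Qed.

Lemma cont_sum (R : realType) (T : topologicalType) (I : finType) (h : I -> T -> R) :
  (forall i, continuous (h i)) -> continuous (fun y => \sum_i h i y).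
Proof.
move=> hc; rewrite unlock /=.
elim: (index_enum I) => [|i r IH] /=; first exact: cst_continuous.
move=> y; apply: continuousD; [exact: hc|exact: IH].
Qed.

Lemma sqdist_continuous (R : realType) n (x : 'cV[R]_n) :
  continuous (fun y : 'cV[R]_n => cf (y - x) (y - x)).
Proof.
rewrite /cf; apply: cont_sum => i y.
have hc : {for y, continuous (fun y : 'cV[R]_n => (y - x) i 0)}.
  have -> : (fun y : 'cV[R]_n => (y - x) i 0) = (fun y => y i 0 - x i 0).
    by apply: funext => z; rewrite !mxE.
  apply: continuousB; [exact: coord_continuous | exact: cst_continuous].
exact: continuousM.
Qed.

Lemma separation (R : realType) n (K : set 'cV[R]_n) (x k0 : 'cV[R]_n) :
  closed K -> convexS K -> K k0 -> ~ K x ->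
  exists c gam, cf c x < gam /\ forall k, K k -> gam <= cf c k.
Proof.
move=> clK cK Kk0 nKx.
pose f := fun y : 'cV[R]_n => cf (y - x) (y - x).
pose g := fun v : 'rV[R]_n => f v^T.
pose F0 := f k0.
pose Bt := [set v : 'rV[R]_n | K v^T /\ g v <= F0].
have cg : continuous g.
  move=> v; apply: continuous_comp; first exact: trmx_continuous.
  exact: sqdist_continuous.
have clB : closed Bt.
  have : closed (trmx @^-1` K `&` g @^-1` [set r | r <= F0]).
    apply: closedI; apply: preimage_closed => //;
      by move=> y _; first [exact: trmx_continuous | exact: cg | exact: closed_le].
  by [].
have bB : bounded_set Bt.
  pose M0 := 1 + F0 + \sum_i `|x i 0|.
  have hM0 : forall v, Bt v -> `|v| <= M0.
    move=> v [_ hv].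
    have F00 : 0 <= F0 by apply: cf_self_ge0.
    have hi : forall i, `|v 0 i| <= M0.
      move=> i.
      have hsq : (v 0 i - x i 0) ^+ 2 <= F0.
        apply: le_trans hv; rewrite /g /f /cf (bigD1 i) //= -expr2.
        rewrite !mxE lerDl; apply: sumr_ge0 => j _; rewrite -expr2; exact: sqr_ge0.
      have hd : `|v 0 i - x i 0| <= 1 + F0.
        rewrite leNgt; apply/negP => hlt.
        have h1 : 1 <= `|v 0 i - x i 0| by lra.
        have : `|v 0 i - x i 0| <= `|v 0 i - x i 0| ^+ 2.
          by rewrite expr2 ler_peMr.
        rewrite real_normK ?num_real //; lra.
      have hx : `|x i 0| <= \sum_i `|x i 0|.
        by rewrite (bigD1 i) //= lerDl sumr_ge0.
      have := ler_normD (v 0 i - x i 0) (x i 0); rewrite subrK.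
      rewrite /M0; lra.
    have -> : `|v| = mx_norm v by [].
    rewrite mx_normrE; apply: bigmax_le => [|ij _].
      by rewrite /M0; apply: addr_ge0; [lra | apply: sumr_ge0].
    by rewrite ord1; apply: hi.
  apply: filterS (nbhs_pinfty_ge (num_real M0)) => M hM v hv.
  exact: le_trans (hM0 v hv) hM.
have cB : compact Bt by apply: bounded_closed_compact.
have neB : Bt !=set0.
  by exists k0^T; split; rewrite /g trmxK.
have [c' /set_mem [Kc' gc'] cmin] := compact_EVT_min neB cB (continuous_subspaceT cg).
pose p := c'^T.
have Kp : K p by [].
have pmin : forall k, K k -> f p <= f k.
  move=> k Kk; have [hk|hk] := leP (f k) F0.
    have hB : Bt k^T by split; rewrite /g trmxK.
    by have := cmin _ (mem_set hB); rewrite /g trmxK.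
  by apply: le_trans gc' (ltW hk).
have vi : forall k, K k -> 0 <= cf (p - x) (k - p).
  move=> k Kk; apply: (@var_ineq R _ (cf (k - p) (k - p))); last exact: cf_self_ge0.
  move=> t t0 t1.
  have Kq : K (t *: k + (1 - t) *: p) by apply: cK => //; apply: ltW.
  have := pmin _ Kq; rewrite /f.
  have -> : t *: k + (1 - t) *: p - x = (p - x) + t *: (k - p).
    by apply/matrixP => i j; rewrite !mxE; ring.
  by rewrite cf_expand -subr_ge0; congr (0 <= _); ring.
exists (p - x), (cf (p - x) p); split.
  have hpx : p - x != 0.
    by apply/negP => /eqP /subr0_eq hpx; apply: nKx; rewrite -hpx.
  have : 0 < cf (p - x) (p - x).
    rewrite lt_def cf_self_ge0 andbT; apply/negP => /eqP /cf_self_eq0 h.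
    by rewrite h eqxx in hpx.
  by rewrite cfB subr_gt0.
by move=> k Kk; have := vi k Kk; rewrite cfB subr_ge0.
Qed.

Lemma conv_self (R : realType) n (S : set 'cV[R]_n) x : S x -> conv_hull S x.
Proof.
move=> Sx; exists 1%N, (fun=> 1), (fun=> x); split => //.
  by rewrite big_ord1.
by rewrite big_ord1 scale1r.
Qed.

Lemma conv_mono (R : realType) n (S1 S2 : set 'cV[R]_n) :
  S1 `<=` S2 -> conv_hull S1 `<=` conv_hull S2.
Proof.
move=> h x [k [w [p [w0 w1 pS ->]]]]; exists k, w, p; split => // i.
exact: h.
Qed.

Lemma conv_convex (R : realType) n (S : set 'cV[R]_n) : convexS (conv_hull S).
Proof.
move=> x y t [k1 [w1 [p1 [w10 w11 p1S ->]]]] [k2 [w2 [p2 [w20 w21 p2S ->]]]] t0 t1.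
pose w := fun i : 'I_(k1 + k2) => match fintype.split i with
  | inl a => t * w1 a | inr b => (1 - t) * w2 b end.
pose p := fun i : 'I_(k1 + k2) => match fintype.split i with
  | inl a => p1 a | inr b => p2 b end.
have sl : forall a : 'I_k1, fintype.split (lshift k2 a) = inl a.
  by move=> a; exact: (unsplitK (inl a)).
have sr : forall b : 'I_k2, fintype.split (rshift k1 b) = inr b.
  by move=> b; exact: (unsplitK (inr b)).
exists (k1 + k2)%N, w, p; split.
- move=> i; rewrite /w; case: (fintype.split i) => a; apply: mulr_ge0 => //.
  by rewrite subr_ge0.
- rewrite big_split_ord /= /w.
  under [X in X + _ = _]eq_bigr => a _ do rewrite sl.
  under [X in _ + X = _]eq_bigr => b _ do rewrite sr.
  by rewrite -!mulr_sumr w11 w21 !mulr1 addrC subrK.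
- by move=> i; rewrite /p; case: (fintype.split i).
- rewrite big_split_ord /= /w /p.
  under [X in _ = X + _]eq_bigr => a _ do rewrite sl.
  under [X in _ = _ + X]eq_bigr => b _ do rewrite sr.
  rewrite !scaler_sumr; congr (_ + _); apply: eq_bigr => i _; by rewrite scalerA.
Qed.

Lemma conv_sub_eq (R : realType) n (S : set 'cV[R]_n) (v : 'cV[R]_n) y :
  conv_hull S y -> conv_hull [set v + s | s in S] (v + y).
Proof.
move=> [k [w [p [w0 w1 pS ->]]]]; exists k, w, (fun i => v + p i); split => //.
  by move=> i; exists (p i).
under [X in _ = X]eq_bigr => i _ do rewrite scalerDr.
by rewrite big_split /= -scaler_suml w1 scale1r.
Qed.

Lemma PB_add_cone (R : realType) m n (A : 'M[R]_(m, n)) b beta w (nu : 'I_n -> R) :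
  injective beta -> PB A b beta w -> (forall j, nonbasic beta j -> 0 <= nu j) ->
  PB A b beta (w + \sum_(j | nonbasic beta j) nu j *: rbar A beta j).
Proof.
move=> inj hw hnu; rewrite {1}(PB_repr inj hw) -addrA -big_split /=.
under eq_bigr do rewrite -scalerDl.
apply: PB_cone => // j hj; apply: addr_ge0; [exact: PB_nonneg hw hj | exact: hnu].
Qed.

Lemma PB_xbar (R : realType) m n (A : 'M[R]_(m, n)) b beta :
  injective beta -> PB A b beta (xbar A b beta).
Proof.
move=> inj; have := @PB_cone R m n A b beta (fun=> 0) inj (fun _ _ => lexx 0).
by rewrite big1 ?addr0 // => j _; rewrite scale0r.
Qed.

Lemma sum_single (R : realType) m n (A : 'M[R]_(m, n)) beta j (l : R) :
  nonbasic beta j ->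
  \sum_(i | nonbasic beta i) (if i == j then l else 0) *: rbar A beta i = l *: rbar A beta j.
Proof.
move=> hj; rewrite (bigD1 j) //= eqxx big1 ?addr0 // => i /andP[_ /negbTE ->].
by rewrite scale0r.
Qed.

Lemma PB_ray (R : realType) m n (A : 'M[R]_(m, n)) b beta w j (l : R) :
  injective beta -> PB A b beta w -> nonbasic beta j -> 0 <= l ->
  PB A b beta (w + l *: rbar A beta j).
Proof.
move=> inj hw hj l0; rewrite -(sum_single A l hj); apply: PB_add_cone => // i _.
by case: (i == j).
Qed.

Lemma alpha_lt_ex (R : realType) m n (A : 'M[R]_(m, n)) b beta C j (lam : R) :
  (alpha A b beta C j < lam%:E)%E ->
  exists l, [/\ 0 <= l, C (xbar A b beta + l *: rbar A beta j) & l < lam].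
Proof.
move=> h; apply: contrapT => hn; move: h; rewrite ltNge => /negP; apply.
apply: le_ereal_inf_tmp => _ [l [l0 Cl] <-]; rewrite lee_fin leNgt; apply/negP => hl.
by apply: hn; exists l.
Qed.

Lemma beta_gt_ex (R : realType) m n (A : 'M[R]_(m, n)) b beta C j (lam : R) :
  (lam%:E < beta_ A b beta C j)%E ->
  exists l, [/\ 0 <= l, C (xbar A b beta + l *: rbar A beta j) & lam < l].
Proof.
move=> h; apply: contrapT => hn; move: h; rewrite ltNge => /negP; apply.
apply: ge_ereal_sup => _ [l [l0 Cl] <-]; rewrite lee_fin leNgt; apply/negP => hl.
by apply: hn; exists l.
Qed.

Lemma seg_in_C (R : realType) m n (A : 'M[R]_(m, n)) b beta C j (lam : R) :
  convexS C -> (alpha A b beta C j < lam%:E)%E -> (lam%:E < beta_ A b beta C j)%E ->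
  C (xbar A b beta + lam *: rbar A beta j).
Proof.
move=> cC /alpha_lt_ex [l1 [l10 C1 h1]] /beta_gt_ex [l2 [l20 C2 h2]].
have d0 : 0 < l2 - l1 by lra.
pose t := (l2 - lam) / (l2 - l1).
have t0 : 0 <= t by rewrite /t divr_ge0 //; lra.
have t1 : t <= 1 by rewrite /t ler_pdivrMr // mul1r; lra.
have := cC _ _ _ C1 C2 t0 t1; congr C.
apply/matrixP => i k; rewrite !mxE /t; field; lra.
Qed.

Lemma alpha_le (R : realType) m n (A : 'M[R]_(m, n)) b beta C j (l : R) :
  0 <= l -> C (xbar A b beta + l *: rbar A beta j) -> (alpha A b beta C j <= l%:E)%E.
Proof. by move=> l0 Cl; apply: ereal_inf_lbound; exists l. Qed.

Lemma beta_pinfty (R : realType) m n (A : 'M[R]_(m, n)) b beta C j :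
  (forall M : R, exists l, [/\ M <= l, 0 <= l & C (xbar A b beta + l *: rbar A beta j)]) ->
  beta_ A b beta C j = +oo%E.
Proof.
move=> H.
have ub : forall M : R, (M%:E <= beta_ A b beta C j)%E.
  move=> M; have [l [Ml l0 Cl]] := H M.
  apply: le_trans (ereal_sup_ubound _); last by exists l.
  by rewrite lee_fin.
case E : (beta_ A b beta C j) => [r| |] //.
  have := ub (r + 1); rewrite E lee_fin => h.
  have : r + 1 <= r := h.
  by exfalso; clear -h; lra.
by have := ub 0; rewrite E.
Qed.

Lemma alpha_pos (R : realType) m n (A : 'M[R]_(m, n)) b beta (C : set 'cV[R]_n) j :
  ~ closure C (xbar A b beta) -> (0 < alpha A b beta C j)%E.
Proof.
move=> nC.
have [e [e0 he]] : exists e : R, 0 < e /\ forall y, C y -> e <= `|xbar A b beta - y|.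
  apply: contrapT => hn; apply: nC; apply/closure_normP => e e0.
  apply: contrapT => hn2; apply: hn; exists e; split => // y Cy.
  rewrite leNgt; apply/negP => hlt; apply: hn2; exists y; split.
    exact: Cy.
  exact: hlt.
set r := rbar A beta j.
have r0 := normr_ge0 r.
have hpos : 0 < e / (`|r| + 1) by rewrite divr_gt0 //; lra.
apply: (@lt_le_trans _ _ (e / (`|r| + 1))%:E); first by rewrite lte_fin.
apply: le_ereal_inf_tmp => _ [l [l0 Cl] <-]; rewrite lee_fin.
have := he _ Cl; rewrite opprD addrA subrr add0r normrN normrZ ger0_norm // => hl.
rewrite ler_pdivrMr; last lra.
nra.
Qed.

Lemma T_sub (R : realType) m n (A : 'M[R]_(m, n)) b beta (C : set 'cV[R]_n) :
  injective beta -> convexS C -> TPC A b beta C `<=` PB A b beta `&` C.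
Proof.
move=> inj cC x [y [z [hy hz ->]]].
have cPC : convexS (PB A b beta `&` C).
  move=> u v t [Pu Cu] [Pv Cv] t0 t1; split; first exact: PB_convex.
  exact: cC.
have h : (PB A b beta `&` C) (xbar A b beta + y).
  have hc := conv_sub_eq (xbar A b beta) hy.
  apply: (conv_sub cPC _ hc) => _ [s [j [hj [lam [hl ->]]]] <-].
  have [nj a0] : nonbasic beta j /\ (0 < alpha A b beta C j)%E.
    by case: hj => -[nj [a0 _]]; split.
  move: hl => /andP[h1 h2].
  have l0 : 0 <= lam.
    have := lt_trans a0 h1; rewrite lte_fin => /ltW //.
  split; first by apply: PB_ray => //; apply: PB_xbar.
  exact: seg_in_C.
by have := hz _ 1 h ler01; rewrite scale1r.
Qed.

Lemma open_recc (R : realType) n (C : set 'cV[R]_n) (x z w : 'cV[R]_n) (lam : R) :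
  open C -> convexS C -> C w -> (forall t, 0 <= t -> C (x + t *: z)) -> 0 <= lam ->
  C (w + lam *: z).
Proof.
move=> oC cC Cw hray l0.
rewrite openE in oC; have := oC w Cw; move=> /nbhs_ballP [e0' e0'0 he0'].
suff H : forall e : R, 0 < e -> ball w e `<=` C -> C (w + lam *: z) by exact: H e0'0 he0'.
move=> e e0 he.
set D := `|w - x|.
have D0 : 0 <= D := normr_ge0 _.
pose th := e / (2 * (D + e)).
have De : 0 < D + e by lra.
have th0 : 0 < th by rewrite /th divr_gt0 // mulr_gt0.
have hth : th * (D + e) = e / 2.
  by rewrite /th; field; rewrite gt_eqF.
have th1 : th <= 1 / 2.
  have : th * (D + e) <= 1 / 2 * (D + e) by rewrite hth; nra.
  by rewrite ler_pM2r //; lra.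
have th2 : 0 < 1 - th by lra.
pose w' := (1 - th)^-1 *: (w - th *: x).
have Cw' : C w'.
  apply: he; rewrite -ball_normE /=.
  have -> : w - w' = (th / (1 - th)) *: (x - w).
    apply/matrixP => i k; rewrite /w' !mxE; field; lra.
  rewrite normrZ ger0_norm; last by rewrite divr_ge0 // ltW.
  rewrite -normrN opprB -/D mulrAC ltr_pdivrMr //.
  nra.
have Cr : C (x + (lam / th) *: z) by apply: hray; rewrite divr_ge0 // ltW.
have t0 : 0 <= 1 - th by lra.
have t1 : 1 - th <= 1 by lra.
have := cC _ _ _ Cw' Cr t0 t1; congr C.
apply/matrixP => i k; rewrite /w' !mxE; field; lra.
Qed.

Lemma main_sup (R : realType) m n (A : 'M[R]_(m, n)) b beta (C : set 'cV[R]_n) x :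
  injective beta -> open C -> convexS C -> ~ closure C (xbar A b beta) ->
  PB A b beta x -> ~ TPC A b beta C x ->
  closure (conv_hull (PB A b beta `\` C)) x.
Proof.
move=> inj oC cC nC Px nTx.
set K := closure (conv_hull (PB A b beta `\` C)).
apply: contrapT => nKx.
have clK : closed K by apply: closed_closure.
have cK : convexS K by apply: closure_convex; apply: conv_convex.
set X := xbar A b beta.
have Kxb : K X.
  apply: subset_closure; apply: conv_self; split; first exact: PB_xbar.
  by move=> CX; apply: nC; exact: subset_closure.
have [c [gam [hx hK]]] := separation clK cK Kxb nKx.
have HC : forall y, PB A b beta y -> cf c y < gam -> C y.
  move=> y Py hy; apply: contrapT => nCy.
  have := hK y (subset_closure (conv_self (conj Py nCy))).
  by rewrite leNgt hy.
set r := rbar A beta.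
pose mu j := x j 0.
have mu0 : forall j, nonbasic beta j -> 0 <= mu j := fun j hj => PB_nonneg Px hj.
have ex : x = X + \sum_(j | nonbasic beta j) mu j *: r j := PB_repr inj Px.
pose a j := - cf c (r j).
pose g := cf c X - gam.
have g0 : 0 <= g by have := hK _ Kxb; rewrite /g subr_ge0.
pose Jm j := nonbasic beta j && (cf c (r j) < 0).
pose s := \sum_(j | Jm j) mu j * a j.
pose L := - \sum_(j | nonbasic beta j) mu j * cf c (r j).
have cfx : cf c x = cf c X - L.
  rewrite {1}ex cfD cf_sum /L opprK; congr (_ + _); apply: eq_bigr => j _.
  by rewrite cfZ.
have Lg : g < L by rewrite /g; lra.
have Ls : L <= s.
  rewrite /L (bigID (fun j => cf c (r j) < 0)) /= opprD.
  have -> : s = - \sum_(j | nonbasic beta j && (cf c (r j) < 0)) mu j * cf c (r j).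
    by rewrite /s /a -sumrN; apply: eq_bigr => j _; rewrite mulrN.
  rewrite gerDl oppr_le0; apply: sumr_ge0 => j /andP[nj hj].
  by rewrite mulr_ge0 ?mu0 // leNgt.
have s0 : 0 < s by lra.
have [j0 hj0] : exists j0, Jm j0.
  apply: contrapT => hn; move: s0; rewrite /s big1 ?ltxx // => j hj.
  by exfalso; apply: hn; exists j.
have Jm_a : forall j, Jm j -> 0 < a j.
  by move=> j /andP[_ hj]; rewrite /a oppr_gt0.
have Jm_nb : forall j, Jm j -> nonbasic beta j by move=> j /andP[].
have Cray : forall j l, Jm j -> 0 <= l -> g < l * a j -> C (X + l *: r j).
  move=> j l hj l0 hl; apply: HC; first by apply: PB_ray => //; [exact: PB_xbar | exact: Jm_nb].
  rewrite cfD cfZ; rewrite /g /a in hl; nra.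
have N1j : forall j, Jm j -> N1 A b beta C j.
  move=> j hj; have a0 := Jm_a j hj.
  split; first exact: Jm_nb.
  split.
  - exact: alpha_pos.
  - have l0 : 0 <= g / a j + 1 by rewrite addr_ge0 // divr_ge0 // ltW.
    have hl : g < (g / a j + 1) * a j.
      by rewrite mulrDl divfK ?gt_eqF // mul1r ltrDl.
    exact: le_lt_trans (alpha_le l0 (Cray _ _ hj l0 hl)) (ltry _).
  - apply: beta_pinfty => M; exists (`|M| + g / a j + 1).
    have hM := normr_ge0 M; have ga : 0 <= g / a j by rewrite divr_ge0 // ltW.
    split.
    + by have := ler_norm M; lra.
    + lra.
    + apply: Cray => //; first lra.
      have e1 : (`|M| + g / a j + 1) * a j = `|M| * a j + g + a j.
        by field; rewrite gt_eqF.
      rewrite e1; nra.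
have lam_in : forall j, Jm j ->
    (alpha A b beta C j < (L / a j)%:E < beta_ A b beta C j)%E.
  move=> j hj; have a0 := Jm_a j hj; have [_ [_ _ ->]] := N1j j hj.
  rewrite ltry andbT.
  pose md := (g + L) / (2 * a j).
  have md0 : 0 <= md by rewrite /md divr_ge0 //; [lra | rewrite mulr_ge0 // ltW].
  have hmd : md * a j = (g + L) / 2 by rewrite /md; field; rewrite gt_eqF.
  have hl : g < md * a j by rewrite hmd; lra.
  apply: le_lt_trans (alpha_le md0 (Cray _ _ hj md0 hl)) _.
  rewrite lte_fin -(ltr_pM2r a0) hmd divfK ?gt_eqF //; lra.
pose w i := if Jm i then mu i * a i / s else 0.
pose p i := if Jm i then (L / a i) *: r i else (L / a j0) *: r j0.
pose y := \sum_(i < n) w i *: p i.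
have hy : conv_hull [set v | exists j, (N1 A b beta C j \/ N2 A b beta C j) /\
    exists lam : R, (alpha A b beta C j < lam%:E < beta_ A b beta C j)%E /\
      v = lam *: rbar A beta j] y.
  exists n, w, p; split.
  - move=> i; rewrite /w; case hJ : (Jm i) => //.
    apply: divr_ge0; last exact: ltW.
    by apply: mulr_ge0; [apply: mu0; exact: Jm_nb | apply: ltW; exact: Jm_a].
  - by rewrite /w -big_mkcond /= -mulr_suml divff // gt_eqF.
  - move=> i; rewrite /p; case hJ : (Jm i).
      by exists i; split; [left; exact: N1j | exists (L / a i); split => //; exact: lam_in].
    by exists j0; split; [left; exact: N1j | exists (L / a j0); split => //; exact: lam_in].
  - by [].
have y_eq : y = \sum_(i | Jm i) (mu i * L / s) *: r i.
  rewrite /y (big_mkcond Jm) /=; apply: eq_bigr => i _; rewrite /w /p.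
  case hJ : (Jm i); last by rewrite scale0r.
  rewrite scalerA; congr (_ *: _); field.
  by rewrite !gt_eqF ?Jm_a.
have cfy : cf c y = - L.
  rewrite y_eq cf_sum.
  have -> : \sum_(i | Jm i) cf c ((mu i * L / s) *: r i) = - (L / s) * s.
    rewrite /s mulr_sumr; apply: eq_bigr => i _; rewrite cfZ /a; ring.
  by rewrite mulNr divfK // gt_eqF.
pose nu j := mu j - (if cf c (r j) < 0 then mu j * L / s else 0).
pose z := x - X - y.
have z_eq : z = \sum_(j | nonbasic beta j) nu j *: r j.
  rewrite /z {1}ex [X + _]addrC addrK y_eq.
  rewrite /Jm [X in _ - X = _]big_mkcondr /=.
  rewrite -sumrB; apply: eq_bigr => j _; rewrite /nu scalerBl.
  by case: (cf c (r j) < 0); rewrite ?scale0r.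
have nu0 : forall j, nonbasic beta j -> 0 <= nu j.
  move=> j hj; rewrite /nu; case: (cf c (r j) < 0); last by rewrite subr0 mu0.
  have hLs : L / s <= 1 by rewrite ler_pdivrMr // mul1r.
  have := mu0 j hj; rewrite -mulrA; nra.
have cfz : cf c z = 0 by rewrite /z !cfB cfy cfx; ring.
have PBz : forall w' (l : R), PB A b beta w' -> 0 <= l -> PB A b beta (w' + l *: z).
  move=> w' l Pw l0; rewrite z_eq scaler_sumr.
  under eq_bigr do rewrite scalerA.
  by apply: PB_add_cone => // j hj; rewrite mulr_ge0 ?nu0.
have hz : recc (PB A b beta `&` C) z.
  move=> w' l [Pw Cw] l0; split; first exact: PBz.
  apply: (open_recc (x := x)) => // t t0; apply: HC; first exact: PBz.
  by rewrite cfD cfZ cfz mulr0 addr0.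
apply: nTx; exists y, z; split => //.
by rewrite /z; apply/matrixP => i k; rewrite !mxE; ring.
Qed.

Unset Implicit Arguments.

Theorem corollary1 (R : realType) (m n : nat) (A : 'M[R]_(m, n)) (b : 'cV[R]_m)
  (beta : 'I_m -> 'I_n) (C : set 'cV[R]_n) :
  \rank A = m ->
  injective beta ->
  AB A beta \in unitmx ->
  (forall k, 0 <= bbar A b beta k 0) ->
  @open 'cV[R]_n C -> convexS C ->
  ~ @closure 'cV[R]_n C (xbar A b beta) ->
  @closure 'cV[R]_n (conv_hull (PB A b beta `\` C)) =
  @closure 'cV[R]_n (conv_hull (PB A b beta `\` TPC A b beta C)).
Proof.
move=> _ inj _ _ oC cC nC.
rewrite eqEsubset; split.
  apply: closureS; apply: conv_mono => x [Px nCx]; split => // Tx.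
  by apply: nCx; have [] := T_sub inj cC Tx.
set K := closure (conv_hull (PB A b beta `\` C)).
have clK : closed K by apply: closed_closure.
have cK : convexS K by apply: closure_convex; apply: conv_convex.
have sub : conv_hull (PB A b beta `\` TPC A b beta C) `<=` K.
  apply: conv_sub => // x [Px nTx]; exact: main_sup.
move=> x hx; rewrite ((closure_id K).1 clK).
exact: closureS sub x hx.
Qed.
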